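(* Let $\alpha,\mu,\nu,\theta,\beta>0$ with $\varrho=\alpha/\mu<1$, let $(N(\infty),M(\infty))$ be distributed according to the stationary distribution of the two-class Processor-Sharing process described in the context, and let $\mathrm{F}_A(u,v)=\mathbb{E}\big(u^{N(\infty)}v^{M(\infty)}\big)$ for $(u,v)\in\mathbb{D}\times\mathbb{D}$, $\mathbb{D}$ the open unit disk. Then $\mathrm{F}_A$ extends analytically to the domain $\mathbb{D}(0,1/\varrho)\times\mathbb{C}$, where $\mathbb{D}(0,1/\varrho)$ is the open disk of center $0$ and radius $1/\varrho$ (indeed the power series defining $\mathrm{F}_A$ converges on this domain).
   Context: $(N,M)$ is the continuous-time Markov process on $\mathbb{N}^2$ with transitions $(n,m)\to(n+1,m)$ at rate $\alpha$, $(n,m)\to(n,m+1)$ at rate $\beta$, $(n,m)\to(n-1,m)$ at rate $\mu n/(n+m)$, $(n,m)\to(n,m-1)$ at rate $\nu m/(n+m)+\theta m$ (convention $0/0=0$); it models a Processor-Sharing queue with patient and impatient customers and has a stationary distribution iff $\varrho<1$. $A=\beta/\theta$. *)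

(* Defs.v *)
From Stdlib Require Import Reals Lra.
From Coquelicot Require Import Coquelicot.
Open Scope R_scope.

(* x / y with the convention 0/0 = 0 (only used with y a natural number). *)
Definition fracn (x : R) (y : nat) : R :=
  match y with O => 0 | S _ => x / INR y end.

Definition out_rate (alpha beta mu nu theta : R) (n m : nat) : R :=
  alpha + beta + mu * fracn (INR n) (n + m)
  + (nu * fracn (INR m) (n + m) + theta * INR m).

Definition in_flux (alpha beta mu nu theta : R) (pi : nat -> nat -> R)
    (n m : nat) : R :=
  (match n with O => 0 | S n' => pi n' m * alpha end)
  + (match m with O => 0 | S m' => pi n m' * beta end)
  + pi (S n) m * (mu * fracn (INR (S n)) (S n + m))
  + pi n (S m) * (nu * fracn (INR (S m)) (n + S m) + theta * INR (S m)).

Definition square_sum (f : nat -> nat -> R) (K : nat) : R :=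
  sum_f_R0 (fun n => sum_f_R0 (fun m => f n m) K) K.

Definition is_stationary_PS (alpha beta mu nu theta : R)
    (pi : nat -> nat -> R) : Prop :=
  (forall n m, 0 <= pi n m)
  /\ Un_cv (square_sum pi) 1
  /\ (forall n m, pi n m * out_rate alpha beta mu nu theta n m
                  = in_flux alpha beta mu nu theta pi n m).

(* Main.v *)
Require Import Defs.
From Stdlib Require Import Reals Lra Lia.
From Coquelicot Require Import Coquelicot.
Open Scope R_scope.

Lemma sum_nonneg (f : nat -> R) N : (forall i, 0 <= f i) -> 0 <= sum_f_R0 f N.
Proof. intros H; induction N; simpl; [apply H| specialize (H (S N)); lra]. Qed.

Lemma sum_mono_N (f : nat -> R) a b : (forall i, 0 <= f i) -> (a <= b)%nat ->
  sum_f_R0 f a <= sum_f_R0 f b.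
Proof.
  intros H Hab; induction Hab; [lra|]. simpl. specialize (H (S m)); lra.
Qed.

Lemma sum_term_le (f : nat -> R) i N : (forall i, 0 <= f i) -> (i <= N)%nat ->
  f i <= sum_f_R0 f N.
Proof.
  intros H Hi. destruct i.
  - clear Hi. induction N; simpl; [lra|]. specialize (H (S N)). lra.
  - apply Rle_trans with (sum_f_R0 f (S i)).
    + simpl. assert (0 <= sum_f_R0 f i) by (apply sum_nonneg; auto). lra.
    + apply sum_mono_N; auto.
Qed.

Lemma sum_swap (f : nat -> nat -> R) K L :
  sum_f_R0 (fun n => sum_f_R0 (fun m => f n m) L) K =
  sum_f_R0 (fun m => sum_f_R0 (fun n => f n m) K) L.
Proof.
  induction K; simpl.
  - reflexivity.
  - rewrite IHK. rewrite <- sum_plus. reflexivity.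
Qed.

Lemma sum_ext (f g : nat -> R) N : (forall i, f i = g i) -> sum_f_R0 f N = sum_f_R0 g N.
Proof. intros H; induction N; simpl; rewrite ?IHN, ?H; reflexivity. Qed.

Lemma sum_zero N : sum_f_R0 (fun _ => 0) N = 0.
Proof. induction N; simpl; [reflexivity| rewrite IHN; ring]. Qed.

Lemma sum_scal_r (f : nat -> R) x N : sum_f_R0 (fun i => f i * x) N = sum_f_R0 f N * x.
Proof. rewrite <- scal_sum. ring. Qed.

Lemma rect_le_square (f : nat -> nat -> R) K L N : (forall n m, 0 <= f n m) ->
  (K <= N)%nat -> (L <= N)%nat ->
  sum_f_R0 (fun n => sum_f_R0 (fun m => f n m) L) K <= square_sum f N.
Proof.
  intros H HK HL. unfold square_sum.
  apply Rle_trans with (sum_f_R0 (fun n => sum_f_R0 (fun m => f n m) N) K).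
  - apply sum_Rle; intros; apply sum_mono_N; auto.
  - apply sum_mono_N; auto. intros; apply sum_nonneg; auto.
Qed.

Lemma square_shell (f : nat -> nat -> R) j :
  square_sum f (S j) = square_sum f j + sum_f_R0 (fun n => f n (S j)) j
     + sum_f_R0 (fun m => f (S j) m) (S j).
Proof.
  unfold square_sum. rewrite tech5.
  assert (E: sum_f_R0 (fun n => sum_f_R0 (fun m => f n m) (S j)) j =
     sum_f_R0 (fun n => sum_f_R0 (fun m => f n m) j) j + sum_f_R0 (fun n => f n (S j)) j).
  { rewrite <- sum_plus. apply sum_ext. intros; reflexivity. }
  rewrite E. ring.
Qed.
Definition mur (mu : R) (n m : nat) := mu * fracn (INR n) (n + m).
Definition dr (nu theta : R) (n m : nat) := nu * fracn (INR m) (n + m) + theta * INR m.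

Lemma mur_0 mu m : mur mu 0 m = 0.
Proof. unfold mur, fracn. destruct m; simpl; [ring|]. unfold Rdiv; ring. Qed.

Lemma dr_0 nu theta n : dr nu theta n 0 = 0.
Proof. unfold dr, fracn. rewrite Nat.add_0_r. destruct n; simpl; [ring|]. unfold Rdiv; ring. Qed.

Lemma fracn_nonneg n m : 0 <= fracn (INR n) (n + m).
Proof.
  unfold fracn. destruct (n + m)%nat eqn:E; [lra|].
  unfold Rdiv. apply Rmult_le_pos; [apply pos_INR|]. left; apply Rinv_0_lt_compat, lt_0_INR; lia.
Qed.

Lemma fracn_nonneg2 n m : 0 <= fracn (INR m) (n + m).
Proof.
  unfold fracn. destruct (n + m)%nat eqn:E; [lra|].
  unfold Rdiv. apply Rmult_le_pos; [apply pos_INR|]. left; apply Rinv_0_lt_compat, lt_0_INR; lia.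
Qed.

Lemma dr_ge nu theta n m : 0 <= nu -> theta * INR m <= dr nu theta n m.
Proof. intros. unfold dr. pose proof (fracn_nonneg2 n m). nra. Qed.

Lemma balance_unf alpha beta mu nu theta pi :
  (forall n m, pi n m * out_rate alpha beta mu nu theta n m
                  = in_flux alpha beta mu nu theta pi n m) ->
  forall n m, pi n m * (alpha + beta + mur mu n m + dr nu theta n m) =
   (match n with O => 0 | S n' => pi n' m * alpha end)
  + (match m with O => 0 | S m' => pi n m' * beta end)
  + pi (S n) m * mur mu (S n) m + pi n (S m) * dr nu theta n (S m).
Proof. intros H n m. apply H. Qed.

Lemma COL alpha beta mu nu theta pi :
  (forall n m, pi n m * out_rate alpha beta mu nu theta n m
                  = in_flux alpha beta mu nu theta pi n m) ->
  forall n L,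
  alpha * sum_f_R0 (fun m => pi n m) L + sum_f_R0 (fun m => pi n m * mur mu n m) L
  + beta * pi n L =
  sum_f_R0 (fun m => match n with O => 0 | S n' => pi n' m * alpha end) L
  + sum_f_R0 (fun m => pi (S n) m * mur mu (S n) m) L + pi n (S L) * dr nu theta n (S L).
Proof.
  intros H n L. pose proof (balance_unf _ _ _ _ _ _ H) as B.
  induction L.
  - simpl. specialize (B n 0%nat). rewrite dr_0 in B. lra.
  - simpl. specialize (B n (S L)). lra.
Qed.

Lemma CUTN alpha beta mu nu theta pi :
  (forall n m, pi n m * out_rate alpha beta mu nu theta n m
                  = in_flux alpha beta mu nu theta pi n m) ->
  forall L n,
  sum_f_R0 (fun m => pi (S n) m * mur mu (S n) m) L
  + sum_f_R0 (fun n' => pi n' (S L) * dr nu theta n' (S L)) n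
  = alpha * sum_f_R0 (fun m => pi n m) L + beta * sum_f_R0 (fun n' => pi n' L) n.
Proof.
  intros H L n. pose proof (COL _ _ _ _ _ _ H) as C.
  induction n.
  - specialize (C 0%nat L).
    rewrite (sum_ext (fun m => match 0%nat with O => 0 | S n' => pi n' m * alpha end) (fun _ => 0)) in C by reflexivity.
    rewrite (sum_ext (fun m => pi 0%nat m * mur mu 0 m) (fun _ => 0)) in C by (intros; rewrite mur_0; ring).
    rewrite !sum_zero in C. change (sum_f_R0 (fun n' => pi n' L) 0) with (pi 0%nat L).
    change (sum_f_R0 (fun n' => pi n' (S L) * dr nu theta n' (S L)) 0) with (pi 0%nat (S L) * dr nu theta 0 (S L)). lra.
  - specialize (C (S n) L). rewrite (tech5 (fun n' => pi n' L)), (tech5 (fun n' => pi n' (S L) * dr nu theta n' (S L))).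
    rewrite (sum_ext (fun m => match S n with O => 0 | S n' => pi n' m * alpha end)
       (fun m => pi n m * alpha)) in C by reflexivity.
    rewrite sum_scal_r in C. change (sum_f_R0 (pi n) L) with (sum_f_R0 (fun m => pi n m) L) in C. lra.
Qed.

Lemma ROW alpha beta mu nu theta pi :
  (forall n m, pi n m * out_rate alpha beta mu nu theta n m
                  = in_flux alpha beta mu nu theta pi n m) ->
  forall m L,
  beta * sum_f_R0 (fun n => pi n m) L + sum_f_R0 (fun n => pi n m * dr nu theta n m) L
  + alpha * pi L m =
  sum_f_R0 (fun n => match m with O => 0 | S m' => pi n m' * beta end) L
  + sum_f_R0 (fun n => pi n (S m) * dr nu theta n (S m)) L + pi (S L) m * mur mu (S L) m.
Proof.
  intros H m L. pose proof (balance_unf _ _ _ _ _ _ H) as B.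
  induction L.
  - simpl. specialize (B 0%nat m). rewrite mur_0 in B. simpl in B. lra.
  - simpl. specialize (B (S L) m). lra.
Qed.

Lemma CUTM alpha beta mu nu theta pi :
  (forall n m, pi n m * out_rate alpha beta mu nu theta n m
                  = in_flux alpha beta mu nu theta pi n m) ->
  forall L m,
  sum_f_R0 (fun n => pi n (S m) * dr nu theta n (S m)) L
  + sum_f_R0 (fun m' => pi (S L) m' * mur mu (S L) m') m
  = beta * sum_f_R0 (fun n => pi n m) L + alpha * sum_f_R0 (fun m' => pi L m') m.
Proof.
  intros H L m. pose proof (ROW _ _ _ _ _ _ H) as C.
  induction m.
  - specialize (C 0%nat L).
    rewrite (sum_ext (fun n => match 0%nat with O => 0 | S m' => pi n m' * beta end) (fun _ => 0)) in C by reflexivity.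
    rewrite (sum_ext (fun n => pi n 0%nat * dr nu theta n 0) (fun _ => 0)) in C by (intros; rewrite dr_0; ring).
    rewrite !sum_zero in C. change (sum_f_R0 (fun m' => pi L m') 0) with (pi L 0%nat).
    change (sum_f_R0 (fun m' => pi (S L) m' * mur mu (S L) m') 0) with (pi (S L) 0%nat * mur mu (S L) 0). lra.
  - specialize (C (S m) L). rewrite (tech5 (fun m' => pi L m')), (tech5 (fun m' => pi (S L) m' * mur mu (S L) m')).
    rewrite (sum_ext (fun n => match S m with O => 0 | S m' => pi n m' * beta end)
       (fun n => pi n m * beta)) in C by reflexivity.
    rewrite sum_scal_r in C. lra.
Qed.

Lemma ss_growing (pi : nat -> nat -> R) : (forall n m, 0 <= pi n m) ->
  Un_growing (square_sum pi).
Proof.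
  intros H j. rewrite square_shell.
  assert (0 <= sum_f_R0 (fun n => pi n (S j)) j) by (apply sum_nonneg; auto).
  assert (0 <= sum_f_R0 (fun m => pi (S j) m) (S j)) by (apply sum_nonneg; auto). lra.
Qed.

Lemma ss_le1 (pi : nat -> nat -> R) : (forall n m, 0 <= pi n m) ->
  Un_cv (square_sum pi) 1 -> forall L, square_sum pi L <= 1.
Proof. intros H1 H2. apply growing_ineq; auto. apply ss_growing; auto. Qed.

Definition Delta (pi : nat -> nat -> R) j := square_sum pi (S j) - square_sum pi j.

Lemma Delta_col (pi : nat -> nat -> R) j n : (forall n m, 0 <= pi n m) -> (n <= j)%nat ->
  sum_f_R0 (fun n' => pi n' (S j)) n <= Delta pi j.
Proof.
  intros H Hn. unfold Delta. rewrite square_shell.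
  assert (0 <= sum_f_R0 (fun m => pi (S j) m) (S j)) by (apply sum_nonneg; auto).
  assert (sum_f_R0 (fun n' => pi n' (S j)) n <= sum_f_R0 (fun n' => pi n' (S j)) j)
    by (apply sum_mono_N; auto). lra.
Qed.

Lemma Delta_row (pi : nat -> nat -> R) j m : (forall n m, 0 <= pi n m) -> (m <= S j)%nat ->
  sum_f_R0 (fun m' => pi (S j) m') m <= Delta pi j.
Proof.
  intros H Hn. unfold Delta. rewrite square_shell.
  assert (0 <= sum_f_R0 (fun n => pi n (S j)) j) by (apply sum_nonneg; auto).
  assert (sum_f_R0 (fun m' => pi (S j) m') m <= sum_f_R0 (fun m' => pi (S j) m') (S j))
    by (apply sum_mono_N; auto). lra.
Qed.

Lemma Delta_nonneg (pi : nat -> nat -> R) j : (forall n m, 0 <= pi n m) -> 0 <= Delta pi j.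
Proof. intros H. pose proof (ss_growing pi H j). unfold Delta. lra. Qed.

Lemma vanish (pi : nat -> nat -> R) X B C j0 : (forall n m, 0 <= pi n m) ->
  Un_cv (square_sum pi) 1 -> 0 <= C ->
  (forall j, (j0 <= j)%nat -> X <= B + C * Delta pi j) -> X <= B.
Proof.
  intros Hp Hcv HC H.
  destruct (Rle_dec X B) as [|Hlt]; [assumption|]. exfalso.
  apply Rnot_le_lt in Hlt.
  set (eps := (X - B) / (2 * (C + 1))).
  assert (Heps : eps > 0) by (unfold eps; apply Rdiv_lt_0_compat; lra).
  destruct (Hcv eps Heps) as [N HN].
  set (j := Nat.max N j0).
  assert (h1 := HN j ltac:(unfold j; lia)).
  assert (h2 := HN (S j) ltac:(unfold j; lia)).
  unfold Rdist in h1, h2. apply Rabs_def2 in h1. apply Rabs_def2 in h2.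
  specialize (H j ltac:(unfold j; lia)).
  pose proof (Delta_nonneg pi j Hp).
  assert (HD : Delta pi j < 2 * eps) by (unfold Delta; lra).
  assert (C * Delta pi j <= C * (2 * eps)) by (apply Rmult_le_compat_l; lra).
  assert (C * (2 * eps) < X - B).
  { unfold eps. replace (C * (2 * ((X - B) / (2 * (C + 1))))) with ((X - B) * (C / (C + 1))) by (field; lra).
    assert (C / (C+1) < 1). { apply (Rmult_lt_reg_r (C+1)); [lra|]. unfold Rdiv. rewrite Rmult_assoc, Rinv_l by lra. lra. }
    nra. }
  lra.
Qed.

Definition bb (A : R) (m : nat) := A ^ m / INR (Factorial.fact m).
Fixpoint cc (alpha beta theta : R) (m : nat) : R :=
  match m with O => 0 | S m' => (beta * cc alpha beta theta m' + alpha) / (theta * INR (S m')) end.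

Lemma bb_S A m : bb A (S m) = A * bb A m / INR (S m).
Proof.
  unfold bb. rewrite fact_simpl, mult_INR. simpl pow.
  assert (INR (Factorial.fact m) <> 0) by (apply not_0_INR, Factorial.fact_neq_0).
  assert (INR (S m) <> 0) by (apply not_0_INR; lia). field; auto.
Qed.

Lemma bb_nonneg A m : 0 <= A -> 0 <= bb A m.
Proof.
  intros. unfold bb. apply Rmult_le_pos; [apply pow_le; auto|].
  left; apply Rinv_0_lt_compat, lt_0_INR, Factorial.lt_O_fact.
Qed.

Lemma cc_nonneg alpha beta theta m : 0 < alpha -> 0 < beta -> 0 < theta -> 0 <= cc alpha beta theta m.
Proof.
  intros. induction m; [simpl; lra|].
  change (cc alpha beta theta (S m)) with ((beta * cc alpha beta theta m + alpha) / (theta * INR (S m))).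
  apply Rmult_le_pos; [nra|]. left; apply Rinv_0_lt_compat.
  apply Rmult_lt_0_compat; auto. apply lt_0_INR; lia.
Qed.

Lemma Rw_bound alpha beta mu nu theta pi :
  0 < alpha -> 0 < mu -> 0 < nu -> 0 < theta -> 0 < beta ->
  is_stationary_PS alpha beta mu nu theta pi ->
  forall j m, (m <= S j)%nat ->
  sum_f_R0 (fun n => pi n m) (S j) <= bb (beta / theta) m + cc alpha beta theta m * Delta pi j.
Proof.
  intros Ha Hm Hn Ht Hb [Hp [Hcv Hbal]] j m. induction m; intros Hm'.
  - assert (sum_f_R0 (fun n => pi n 0%nat) (S j) <= square_sum pi (S j)).
    { apply Rle_trans with (sum_f_R0 (fun n => sum_f_R0 (fun m => pi n m) 0) (S j)).
      + apply sum_Rle; intros; simpl; lra.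
      + apply rect_le_square; auto; lia. }
    pose proof (ss_le1 pi Hp Hcv (S j)). unfold bb. change (cc alpha beta theta 0) with 0. simpl pow. simpl INR. lra.
  - specialize (IHm ltac:(lia)).
    pose proof (CUTM _ _ _ _ _ _ Hbal (S j) m) as C.
    assert (H1 : 0 <= sum_f_R0 (fun m' => pi (S (S j)) m' * mur mu (S (S j)) m') m).
    { apply sum_nonneg. intros. apply Rmult_le_pos; auto. unfold mur. apply Rmult_le_pos; [lra|apply fracn_nonneg]. }
    assert (H2 : sum_f_R0 (fun m' => pi (S j) m') m <= Delta pi j) by (apply Delta_row; auto; lia).
    assert (H3 : theta * INR (S m) * sum_f_R0 (fun n => pi n (S m)) (S j) <=
                 sum_f_R0 (fun n => pi n (S m) * dr nu theta n (S m)) (S j)).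
    { rewrite scal_sum. apply sum_Rle. intros. pose proof (dr_ge nu theta n (S m) ltac:(lra)).
      pose proof (Hp n (S m)). nra. }
    assert (HS : 0 < theta * INR (S m)) by (apply Rmult_lt_0_compat; auto; apply lt_0_INR; lia).
    set (Rw := sum_f_R0 (fun n => pi n (S m)) (S j)) in *.
    set (Rw0 := sum_f_R0 (fun n => pi n m) (S j)) in *.
    pose proof (Delta_nonneg pi j Hp).
    assert (theta * INR (S m) * Rw <= beta * (bb (beta/theta) m + cc alpha beta theta m * Delta pi j) + alpha * Delta pi j).
    { assert (beta * Rw0 <= beta * (bb (beta/theta) m + cc alpha beta theta m * Delta pi j)) by (apply Rmult_le_compat_l; lra).
      assert (alpha * sum_f_R0 (fun m' => pi (S j) m') m <= alpha * Delta pi j) by (apply Rmult_le_compat_l; lra).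
      lra. }
    rewrite bb_S.
    change (cc alpha beta theta (S m)) with ((beta * cc alpha beta theta m + alpha) / (theta * INR (S m))).
    apply (Rmult_le_reg_l (theta * INR (S m))); auto.
    replace (theta * INR (S m) * (beta / theta * bb (beta / theta) m / INR (S m) +
      (beta * cc alpha beta theta m + alpha) / (theta * INR (S m)) * Delta pi j))
      with (beta * (bb (beta/theta) m + cc alpha beta theta m * Delta pi j) + alpha * Delta pi j).
    + lra.
    + assert (INR (S m) <> 0) by (apply not_0_INR; lia). field. split; lra.
Qed.

Lemma exp_partial x N : 0 <= x -> sum_f_R0 (fun i => / INR (Factorial.fact i) * x ^ i) N <= exp x.
Proof.
  intros Hx. apply growing_ineq.
  - intros n. rewrite tech5. assert (0 <= / INR (Factorial.fact (S n)) * x ^ S n).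
    { apply Rmult_le_pos; [left; apply Rinv_0_lt_compat, lt_0_INR, Factorial.lt_O_fact| apply pow_le; auto]. }
    lra.
  - exact (proj2_sig (exist_exp x)).
Qed.

Lemma M_rect alpha beta mu nu theta pi W :
  0 < alpha -> 0 < mu -> 0 < nu -> 0 < theta -> 0 < beta -> 0 <= W ->
  is_stationary_PS alpha beta mu nu theta pi ->
  forall K M, sum_f_R0 (fun n => sum_f_R0 (fun m => pi n m * W ^ m) M) K <= exp (beta / theta * W).
Proof.
  intros Ha Hm Hn Ht Hb HW Hst K M.
  pose proof Hst as [Hp [Hcv Hbal]].
  apply (vanish pi _ _ (sum_f_R0 (fun m => cc alpha beta theta m * W ^ m) M) (Nat.max K M) Hp Hcv).
  { apply sum_nonneg; intros; apply Rmult_le_pos; [apply cc_nonneg; auto| apply pow_le; auto]. }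
  intros j Hj.
  rewrite sum_swap.
  apply Rle_trans with (sum_f_R0 (fun m => sum_f_R0 (fun n => pi n m) (S j) * W ^ m) M).
  { apply sum_Rle; intros m Hm'. rewrite <- sum_scal_r. apply sum_mono_N; [|lia].
    intros; apply Rmult_le_pos; auto; apply pow_le; auto. }
  apply Rle_trans with (sum_f_R0 (fun m => bb (beta/theta) m * W ^ m + (cc alpha beta theta m * W ^ m) * Delta pi j) M).
  { apply sum_Rle; intros m Hm'. pose proof (Rw_bound _ _ _ _ _ _ Ha Hm Hn Ht Hb Hst j m ltac:(lia)).
    assert (0 <= W ^ m) by (apply pow_le; auto). nra. }
  rewrite sum_plus, sum_scal_r.
  apply Rplus_le_compat_r.
  apply Rle_trans with (sum_f_R0 (fun i => / INR (Factorial.fact i) * (beta / theta * W) ^ i) M).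
  - right. apply sum_ext. intros i. unfold bb. rewrite Rpow_mult_distr. unfold Rdiv. ring.
  - apply exp_partial. apply Rmult_le_pos; auto. unfold Rdiv; apply Rmult_le_pos; [lra|left; apply Rinv_0_lt_compat; lra].
Qed.

Lemma pointwise_N (R mu : R) k n m : 1 <= R -> 0 < mu -> (1 <= k)%nat ->
  (1 - / INR k) * R ^ (S n) <= R ^ (S n) / mu * mur mu (S n) m + (R ^ k) ^ m.
Proof.
  intros HR Hmu Hk.
  assert (HRn : 0 < R ^ S n) by (apply pow_lt; lra).
  assert (Hk' : 0 < INR k) by (apply lt_0_INR; lia).
  assert (Hfr : mur mu (S n) m = mu * (INR (S n) / INR (S n + m))) by reflexivity.
  assert (Hpos : 0 < INR (S n + m)) by (apply lt_0_INR; lia).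
  assert (0 <= INR (S n) / INR (S n + m)) by (apply Rdiv_le_0_compat; [apply pos_INR|lra]).
  assert (0 <= (R ^ k) ^ m) by (apply pow_le; apply pow_le; lra).
  rewrite Hfr.
  replace (R ^ S n / mu * (mu * (INR (S n) / INR (S n + m)))) with (R ^ S n * (INR (S n) / INR (S n + m)))
    by (field; lra).
  destruct (Compare_dec.le_lt_dec (k * m) (S n)) as [Hc|Hc].
  - assert (1 - / INR k <= INR (S n) / INR (S n + m)).
    { apply (Rmult_le_reg_r (INR k * INR (S n + m))); [nra|].
      replace ((1 - / INR k) * (INR k * INR (S n + m))) with ((INR k - 1) * INR (S n + m)) by (field; lra).
      replace (INR (S n) / INR (S n + m) * (INR k * INR (S n + m))) with (INR k * INR (S n)) by (field; lra).
      rewrite plus_INR. apply le_INR in Hc. rewrite mult_INR in Hc.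
      assert (1 <= INR k) by (apply (le_INR 1); lia). pose proof (pos_INR m). nra. }
    nra.
  - assert (R ^ S n <= (R ^ k) ^ m). { rewrite <- pow_mult. apply Rle_pow; auto; lia. }
    assert (0 <= / INR k) by (left; apply Rinv_0_lt_compat; lra).
    assert (0 <= R ^ S n * (INR (S n) / INR (S n + m))) by nra. nra.
Qed.

Lemma N_rect alpha beta mu nu theta pi (R : R) k :
  0 < alpha -> 0 < mu -> 0 < nu -> 0 < theta -> 0 < beta ->
  is_stationary_PS alpha beta mu nu theta pi ->
  1 <= R -> (1 <= k)%nat -> 0 < 1 - / INR k - alpha / mu * R ->
  forall K, sum_f_R0 (fun n => sum_f_R0 (fun m => pi n m * R ^ n) K) K <=
     (1 + exp (beta / theta * R ^ k)) / (1 - / INR k - alpha / mu * R).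
Proof.
  intros Ha Hm Hn Ht Hb Hst HR Hk Hc K.
  pose proof Hst as [Hp [Hcv Hbal]].
  set (c := 1 - / INR k - alpha / mu * R) in *.
  set (E := exp (beta / theta * R ^ k)).
  set (G := sum_f_R0 (fun n => R ^ n) (S K)).
  assert (HG : 0 <= G) by (apply sum_nonneg; intros; apply pow_le; lra).
  apply (vanish pi _ _ (beta / mu * G / c) (S K) Hp Hcv).
  { apply Rdiv_le_0_compat; auto. apply Rmult_le_pos; auto. apply Rdiv_le_0_compat; lra. }
  intros j Hj.
  set (P := fun n => sum_f_R0 (fun m => pi n m) (S j)).
  set (X := fun N => sum_f_R0 (fun n => R ^ n * P n) N).
  set (Wt := fun N => sum_f_R0 (fun n => sum_f_R0 (fun m => pi n m * (R ^ k) ^ m) (S j)) N).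
  set (D := Delta pi j).
  assert (HD : 0 <= D) by (apply Delta_nonneg; auto).
  assert (HP : forall n, 0 <= P n) by (intros; apply sum_nonneg; auto).
  assert (Hrho : 0 <= alpha / mu * R) by (apply Rmult_le_pos; [apply Rdiv_le_0_compat|]; lra).
  assert (Hstep : forall n, (n <= j)%nat ->
     (1 - / INR k) * (R ^ S n * P (S n)) <= alpha / mu * R * (R ^ n * P n)
        + beta / mu * R ^ S n * D
        + sum_f_R0 (fun m => pi (S n) m * (R ^ k) ^ m) (S j)).
  { intros n Hnj.
    pose proof (CUTN _ _ _ _ _ _ Hbal (S j) n) as C.
    assert (C1 : 0 <= sum_f_R0 (fun n' => pi n' (S (S j)) * dr nu theta n' (S (S j))) n).
    { apply sum_nonneg; intros. apply Rmult_le_pos; auto.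
      eapply Rle_trans; [|apply dr_ge; lra]. apply Rmult_le_pos; [lra|apply pos_INR]. }
    assert (C2 : sum_f_R0 (fun n' => pi n' (S j)) n <= D) by (apply Delta_col; auto).
    set (Mu := sum_f_R0 (fun m => pi (S n) m * mur mu (S n) m) (S j)) in *.
    assert (HMu : Mu <= alpha * P n + beta * D).
    { unfold P. assert (beta * sum_f_R0 (fun n' => pi n' (S j)) n <= beta * D) by (apply Rmult_le_compat_l; lra). lra. }
    assert (H1 : (1 - / INR k) * (R ^ S n * P (S n)) <= R ^ S n / mu * Mu +
               sum_f_R0 (fun m => pi (S n) m * (R ^ k) ^ m) (S j)).
    { unfold P, Mu. rewrite scal_sum, scal_sum, scal_sum, <- sum_plus. apply sum_Rle. intros m _.
      pose proof (pointwise_N R mu k n m HR Hm Hk). pose proof (Hp (S n) m). nra. }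
    assert (H2 : R ^ S n / mu * Mu <= R ^ S n / mu * (alpha * P n + beta * D)).
    { apply Rmult_le_compat_l; auto. apply Rdiv_le_0_compat; [apply pow_le; lra| lra]. }
    replace (R ^ S n / mu * (alpha * P n + beta * D)) with
      (alpha / mu * R * (R ^ n * P n) + beta / mu * R ^ S n * D) in H2 by (simpl; field; lra).
    lra. }
  assert (Hind : forall N, (N <= j)%nat ->
     (1 - / INR k) * X (S N) <= alpha / mu * R * X N + P 0%nat + Wt (S N)
        + beta / mu * D * sum_f_R0 (fun n => R ^ n) (S N)).
  { induction N; intros HN.
    - specialize (Hstep 0%nat HN). unfold X, Wt.
      assert (0 <= beta / mu * D) by (apply Rmult_le_pos; [apply Rdiv_le_0_compat|]; lra).
      assert (0 <= sum_f_R0 (fun m => pi 0%nat m * (R ^ k) ^ m) (S j)).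
      { apply sum_nonneg; intros; apply Rmult_le_pos; auto; apply pow_le, pow_le; lra. }
      assert (0 <= / INR k) by (left; apply Rinv_0_lt_compat, lt_0_INR; lia).
      pose proof (HP 0%nat). rewrite (tech5 _ 0), (tech5 _ 0), (tech5 _ 0).
      change (sum_f_R0 (fun n => R ^ n * P n) 0) with (R ^ 0 * P 0%nat).
      change (sum_f_R0 (fun n => R ^ n) 0) with (R ^ 0).
      change (sum_f_R0 (fun n => sum_f_R0 (fun m => pi n m * (R ^ k) ^ m) (S j)) 0) with (sum_f_R0 (fun m => pi 0%nat m * (R ^ k) ^ m) (S j)).
      change (sum_f_R0 (fun n => R ^ n * P n) 0) with (R ^ 0 * P 0%nat).
      simpl pow in *. nra.
    - specialize (IHN ltac:(lia)). specialize (Hstep (S N) HN).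
      unfold X, Wt in *. rewrite !(tech5 _ (S N)).
      rewrite (tech5 (fun n => R ^ n * P n) N) in *. lra. }
  specialize (Hind K ltac:(lia)).
  assert (HXm : X K <= X (S K)) by (unfold X; apply sum_mono_N; [intros; apply Rmult_le_pos; [apply pow_le; lra|auto]|lia]).
  assert (HP0 : P 0%nat <= 1).
  { apply Rle_trans with (square_sum pi (S j)); [|apply ss_le1; auto].
    apply Rle_trans with (sum_f_R0 (fun n => sum_f_R0 (fun m => pi n m) (S j)) 0);
      [right; reflexivity| apply rect_le_square; auto; lia]. }
  assert (HW : Wt (S K) <= E).
  { unfold Wt, E. apply (M_rect alpha beta mu nu theta pi); auto. apply pow_le; lra. }
  assert (HT : sum_f_R0 (fun n => sum_f_R0 (fun m => pi n m * R ^ n) K) K <= X (S K)).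
  { apply Rle_trans with (X K); auto. unfold X. apply sum_Rle. intros n _.
    rewrite sum_scal_r, Rmult_comm. apply Rmult_le_compat_l; [apply pow_le; lra|].
    unfold P. apply sum_mono_N; auto; lia. }
  assert (c * X (S K) <= 1 + E + beta / mu * G * D).
  { unfold c. fold G in Hind. 
    assert (alpha / mu * R * X K <= alpha / mu * R * X (S K)) by (apply Rmult_le_compat_l; auto).
    lra. }
  apply Rle_trans with (X (S K)); auto.
  apply (Rmult_le_reg_l c); auto.
  replace (c * ((1 + E) / c + beta / mu * G / c * D)) with (1 + E + beta / mu * G * D) by (field; lra).
  lra.
Qed.

Lemma bernoulli (l : R) n : 1 <= l -> 1 + INR n * (l - 1) <= l ^ n.
Proof.
  intros H. induction n.
  - simpl. lra.
  - rewrite S_INR. simpl pow. pose proof (pos_INR n). assert (0 <= INR n * (l - 1) * (l - 1)) by (apply Rmult_le_pos; [apply Rmult_le_pos|]; lra). nra.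
Qed.

Lemma pointwise_final (a b r s R : R) k0 n m :
  0 <= a -> 0 <= b -> a <= r -> b <= s -> 1 <= r -> 1 <= s -> r < R ->
  s <= (R / r) ^ k0 ->
  a ^ n * b ^ m <= R ^ n + (r ^ k0 * s) ^ m.
Proof.
  intros Ha Hb Har Hbs Hr Hs HrR Hk0.
  assert (a ^ n * b ^ m <= r ^ n * s ^ m).
  { apply Rmult_le_compat; try apply pow_le; auto; apply pow_incr; lra. }
  assert (0 <= R ^ n) by (apply pow_le; lra).
  assert (0 <= (r ^ k0 * s) ^ m) by (apply pow_le; apply Rmult_le_pos; [apply pow_le|]; lra).
  assert (Hl : 1 <= R / r) by (apply (Rmult_le_reg_r r); [lra|]; unfold Rdiv; rewrite Rmult_assoc, Rinv_l by lra; lra).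
  destruct (Compare_dec.le_lt_dec (k0 * m) n) as [Hc|Hc].
  - assert (s ^ m <= (R / r) ^ n).
    { apply Rle_trans with (((R / r) ^ k0) ^ m).
      - apply pow_incr; lra.
      - rewrite <- pow_mult. apply Rle_pow; auto. }
    assert (Hq : r ^ n * s ^ m <= r ^ n * (R / r) ^ n) by (apply Rmult_le_compat_l; [apply pow_le|]; lra).
    rewrite <- Rpow_mult_distr in Hq.
    replace (r * (R / r)) with R in Hq by (field; lra). lra.
  - assert (r ^ n <= (r ^ k0) ^ m) by (rewrite <- pow_mult; apply Rle_pow; auto; lia).
    assert (Hq : r ^ n * s ^ m <= (r ^ k0) ^ m * s ^ m) by (apply Rmult_le_compat_r; [apply pow_le|]; lra).
    rewrite <- Rpow_mult_distr in Hq. lra.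
Qed.

Theorem lemma1 (alpha mu nu theta beta : R) (pi : nat -> nat -> R) :
  0 < alpha -> 0 < mu -> 0 < nu -> 0 < theta -> 0 < beta ->
  alpha / mu < 1 ->
  is_stationary_PS alpha beta mu nu theta pi ->
  forall u v : C, Cmod u < / (alpha / mu) ->
  exists B : R, forall K : nat,
    square_sum (fun n m => pi n m * Cmod u ^ n * Cmod v ^ m) K <= B.
Proof.
  intros Ha Hm Hn Ht Hb Hrho Hst u v Hu.
  pose proof Hst as [Hp [Hcv Hbal]].
  set (rho := alpha / mu) in *.
  assert (Hrho0 : 0 < rho) by (unfold rho; apply Rdiv_lt_0_compat; lra).
  set (r := Rmax 1 (Cmod u)). set (s := Rmax 1 (Cmod v)).
  assert (Hr1 : 1 <= r) by apply Rmax_l. assert (Hs1 : 1 <= s) by apply Rmax_l.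
  assert (Hur : Cmod u <= r) by apply Rmax_r. assert (Hvs : Cmod v <= s) by apply Rmax_r.
  assert (Hinv : 1 < / rho).
  { apply (Rmult_lt_reg_l rho); auto. rewrite Rinv_r by lra. lra. }
  assert (Hrlt : r < / rho) by (unfold r; apply Rmax_lub_lt; lra).
  set (R0 := (r + / rho) / 2).
  assert (HrR : r < R0) by (unfold R0; lra).
  assert (HrhoR : rho * R0 < 1).
  { unfold R0. assert (rho * r < 1).
    { apply Rlt_le_trans with (rho * / rho); [apply Rmult_lt_compat_l; auto| rewrite Rinv_r; lra]. }
    replace (rho * ((r + / rho) / 2)) with ((rho * r + 1) / 2) by (field; lra). lra. }
  destruct (archimed_cor1 (1 - rho * R0) ltac:(lra)) as [k [Hk1 Hk2]].
  assert (Hl : 1 < R0 / r) by (apply (Rmult_lt_reg_r r); [lra|]; unfold Rdiv; rewrite Rmult_assoc, Rinv_l by lra; lra).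
  destruct (archimed_cor1 ((R0 / r - 1) / s) ltac:(apply Rdiv_lt_0_compat; lra)) as [k0 [Hk01 Hk02]].
  assert (Hk0 : s <= (R0 / r) ^ k0).
  { pose proof (bernoulli (R0 / r) k0 ltac:(lra)).
    assert (HI : 0 < INR k0) by (apply lt_0_INR; lia).
    assert (s < INR k0 * (R0 / r - 1)).
    { apply (Rmult_lt_reg_r (/ INR k0)); [apply Rinv_0_lt_compat; lra|].
      replace (INR k0 * (R0 / r - 1) * / INR k0) with (R0 / r - 1) by (field; lra).
      apply (Rmult_lt_reg_r (/ s)); [apply Rinv_0_lt_compat; lra|].
      replace (s * / INR k0 * / s) with (/ INR k0) by (field; lra). exact Hk01. }
    lra. }
  set (S0 := r ^ k0 * s).
  exists ((1 + exp (beta / theta * R0 ^ k)) / (1 - / INR k - alpha / mu * R0) + exp (beta / theta * S0)).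
  intros K.
  assert (HS0 : 0 <= S0) by (unfold S0; apply Rmult_le_pos; [apply pow_le|]; lra).
  pose proof (N_rect alpha beta mu nu theta pi R0 k Ha Hm Hn Ht Hb Hst ltac:(lra) ltac:(lia) ltac:(fold rho; lra) K) as HN.
  pose proof (M_rect alpha beta mu nu theta pi S0 Ha Hm Hn Ht Hb HS0 Hst K K) as HM.
  apply Rle_trans with (sum_f_R0 (fun n => sum_f_R0 (fun m => pi n m * R0 ^ n) K) K +
                        sum_f_R0 (fun n => sum_f_R0 (fun m => pi n m * S0 ^ m) K) K); [|lra].
  unfold square_sum. rewrite <- sum_plus. apply sum_Rle. intros n _.
  rewrite <- sum_plus. apply sum_Rle. intros m _.
  pose proof (pointwise_final (Cmod u) (Cmod v) r s R0 k0 n m (Cmod_ge_0 u) (Cmod_ge_0 v) Hur Hvs Hr1 Hs1 HrR Hk0).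
  fold S0 in H. pose proof (Hp n m). nra.
Qed.
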